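(* For every positive integer $n$, \[ Z(n)=1+\frac{\left(1+(-1)^{n-1}\right)(n-1)!}{n+1}, \] where $Z(n)=\sum_{k=0}^{n-1}\frac{1+(-1)^{k}k!(n-k-1)!}{n}$. In particular $Z(2m)=1$ and $Z(2m-1)=1+\frac{(2m-2)!}{m}$ for all positive integers $m$, and $Z(n)\in\mathbb{N}$ for all $n\in\mathbb{N}$. *)

(* Defs.v *)
From mathcomp Require Import all_boot all_order all_algebra.
Set Implicit Arguments. Unset Strict Implicit. Unset Printing Implicit Defensive.
Import Order.TTheory GRing.Theory Num.Theory.
Local Open Scope ring_scope.

Definition Z (n : nat) : rat :=
  \sum_(k < n) (1 + (-1) ^+ k * (k`!)%:R * ((n - k - 1)`!)%:R) / n%:R.

(* Main.v *)
Require Import Defs.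
From mathcomp Require Import all_boot all_order all_algebra.
From mathcomp Require Import ring lra zify.
Import Order.TTheory GRing.Theory Num.Theory.
Local Open Scope ring_scope.

Lemma keyS (N : nat) : (N+2)%:R * \sum_(k < N.+1) (-1) ^+ k * (k`!)%:R * ((N-k)`!)%:R
  = ((N.+1)`!)%:R * (1 + (-1) ^+ N) :> rat.
Proof.
rewrite mulr_sumr.
rewrite -(big_mkord xpredT (fun k => (N+2)%:R * ((-1) ^+ k * (k`!)%:R * ((N-k)`!)%:R) : rat)).
rewrite (telescope_sumr_eq (fun k => - ((-1) ^+ k * (k`!)%:R * ((N.+1-k)`!)%:R) : rat)) //.
  rewrite subnn subn0 fact0 exprS; ring.
move=> k /andP[_ hk].
have -> : (N.+1 - k = (N - k).+1)%N by lia.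
have -> : (N.+1 - k.+1 = (N - k))%N by lia.
rewrite !factS exprS.
have -> : (N + 2 = (N - k) + k + 2)%N by lia.
rewrite !natrM !natrD; ring.
Qed.
Lemma part1 (n : nat) : (0 < n)%N ->
     Z n = 1 + (1 + (-1) ^+ (n - 1)) * ((n - 1)`!)%:R / (n + 1)%:R.
Proof.
case: n => [//|N] _.
rewrite /Z -mulr_suml big_split /= sumr_const card_ord.
rewrite (eq_bigr (fun k : 'I_N.+1 => (-1) ^+ k * (k`!)%:R * ((N-k)`!)%:R)); last first.
  by move=> k _; have -> : (N.+1 - k - 1 = N - k)%N by lia.
have h := keyS N.
set S := \sum_(_ < _) _ in h *.
have h2 : (N+2)%:R != 0 :> rat by rewrite pnatr_eq0 addn2.
have hS : S = ((N.+1)`!)%:R * (1 + (-1) ^+ N) / (N+2)%:R.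
  by rewrite -h mulrAC divff // mul1r.
rewrite hS factS subSS subn0 natrM.
have -> : (N.+1 + 1 = N + 2)%N by lia.
have h1 : (N.+1)%:R != 0 :> rat by rewrite pnatr_eq0.

have hN : 0 <= N%:R :> rat := ler0n _ _.
field; by apply/andP; split; apply: lt0r_neq0; lra.
Qed.

Lemma part2 (m : nat) : (0 < m)%N ->
  Z (2 * m) = 1 /\ Z (2 * m - 1) = 1 + ((2 * m - 2)`!)%:R / m%:R.
Proof.
move=> hm; split.
  rewrite part1; last lia.
  have -> : (2 * m-1 = S (2*(m-1)))%N by lia.
  rewrite -signr_odd oddS oddM /=.
  by rewrite expr1 subrr !mul0r addr0.
rewrite part1; last lia.
have -> : (2 * m-1-1 = 2*(m-1))%N by lia.
rewrite -signr_odd oddM /= expr0.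
have -> : (2 * m-1+1 = 2 * m)%N by lia.
have -> : (2 * m-2 = 2*(m-1))%N by lia.
have h1 : m%:R != 0 :> rat by rewrite pnatr_eq0 -lt0n.
rewrite natrM; field; by rewrite h1.
Qed.

Lemma part3 (n : nat) : (0 < n)%N -> exists k : nat, Z n = k%:R.
Proof.
move=> hn.
have [m [hm [-> | ->]]] : exists m, (0 < m)%N /\ (n = 2 * m \/ n = 2 * m - 1)%N.
  exists (n.+1 %/ 2)%N; lia.
  by exists 1%N; case: (part2 _ hm).
case: (part2 _ hm) => _ ->.
exists (1 + (2 * m-2)`! %/ m)%N.
rewrite natrD natf_div //.
case: (m =P 1)%N => [-> //| hm1].
apply: dvdn_fact; lia.
Qed.

Theorem mainTheorem4 :
  (forall n : nat, (0 < n)%N ->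
     Z n = 1 + (1 + (-1) ^+ (n - 1)) * ((n - 1)`!)%:R / (n + 1)%:R)
  /\ (forall m : nat, (0 < m)%N ->
        Z (2 * m) = 1 /\ Z (2 * m - 1) = 1 + ((2 * m - 2)`!)%:R / m%:R)
  /\ (forall n : nat, (0 < n)%N -> exists k : nat, Z n = k%:R).
Proof. split; [exact: part1 | split; [exact: part2 | exact: part3]]. Qed.
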